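(* Let $B$ be a finite simplicial complex. Any consistent collection of small symmetric necklaces (with morphisms) over the simplices of the $3$-skeleton of $B$ extends uniquely to a consistent collection of small symmetric necklaces over all simplices of $B$. Equivalently, for every simplex $\Delta$ of dimension at least $4$, a consistent collection of necklaces over all proper faces of $\Delta$ is the collection of restrictions of a unique necklace over $\Delta$.
   Context: A necklace over a simplex $\sigma$ is a cyclic word whose beads are colored by the vertices of $\sigma$; for a face $\tau\subset\sigma$ the necklace of $\tau$ is obtained from that of $\sigma$ by deleting all beads whose colors are not vertices of $\tau$, which gives an injective color- and cyclic-order-preserving morphism; a collection of necklaces and morphisms is consistent if these morphisms compose correctly along chains of faces. A small symmetric necklace contains exactly two beads of each color and is invariant under rotation by half its length. *)

(* Defs.v *)
From mathcomp Require Import all_boot.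
Set Implicit Arguments. Unset Strict Implicit. Unset Printing Implicit Defensive.

(* Necklaces are represented concretely: a necklace is a word [s : seq V];
   its beads are the positions [i < size s], the color of bead i is
   [onth s i], and the cyclic order of beads is the cyclic order of Z/(size s). *)

Definition cyc3 (i j k : nat) : bool :=
  [|| (i < j < k), (j < k < i) | (k < i < j)].

Section Necklaces.
Variable V : finType.

Definition small_symmetric (S : {set V}) (s : seq V) : bool :=
  [forall v : V, count_mem v s == (if v \in S then 2 else 0)] &&
  (rot (size s %/ 2) s == s).

(* [f] is the morphism exhibiting [a] as the necklace obtained from [b] by
   deleting all beads whose colors are not in [T]: injective, color- and
   cyclic-order-preserving, with image exactly the beads of [b] colored in T *)
Definition restr_morph (T : {set V}) (a b : seq V) (f : nat -> nat) : Prop :=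
  [/\ forall i j, i < size a -> j < size a -> f i = f j -> i = j,
      forall i, i < size a -> onth b (f i) = onth a i,
      forall i j k, i < size a -> j < size a -> k < size a ->
        cyc3 i j k -> cyc3 (f i) (f j) (f k)
    & forall j c, onth b j = Some c ->
        (c \in T <-> exists2 i, i < size a & f i = j)].

Definition simplicial_complex (B : {set {set V}}) : Prop :=
  set0 \notin B /\
  (forall s t : {set V}, s \in B -> t \subset s -> t != set0 -> t \in B).

Definition consistent_collection (F : pred {set V})
    (N : {set V} -> seq V) (phi : {set V} -> {set V} -> nat -> nat) : Prop :=
  [/\ forall s, F s -> small_symmetric s (N s),
      forall t s, F t -> F s -> t \proper s -> restr_morph t (N t) (N s) (phi t s)
    & forall r t s, F r -> F t -> F s -> r \proper t -> t \proper s ->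
        forall i, i < size (N r) -> phi t s (phi r t i) = phi r s i].

(* the 3-skeleton of B: simplices of dimension <= 3, i.e. at most 4 vertices *)
Definition skel3 (B : {set {set V}}) : pred {set V} :=
  fun s => (s \in B) && (#|s| <= 4).

Definition extends_collection (B : {set {set V}})
    (N0 : {set V} -> seq V) (phi0 : {set V} -> {set V} -> nat -> nat)
    (N : {set V} -> seq V) (phi : {set V} -> {set V} -> nat -> nat) : Prop :=
  [/\ consistent_collection (mem B) N phi,
      forall s, skel3 B s -> N s = N0 s
    & forall t s, skel3 B t -> skel3 B s -> t \proper s ->
        forall i, i < size (N0 t) -> phi t s i = phi0 t s i].

(* two collections over B are isomorphic relative to the 3-skeleton:
   bead bijections (color- and cyclic-order-preserving) over every simplex,
   the identity on the 3-skeleton, commuting with all morphisms *)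
Definition iso_rel_skel3 (B : {set {set V}})
    (N1 : {set V} -> seq V) (phi1 : {set V} -> {set V} -> nat -> nat)
    (N2 : {set V} -> seq V) (phi2 : {set V} -> {set V} -> nat -> nat) : Prop :=
  exists psi : {set V} -> nat -> nat,
  [/\ forall s, s \in B -> restr_morph s (N1 s) (N2 s) (psi s),
      forall s, skel3 B s -> forall i, i < size (N1 s) -> psi s i = i
    & forall t s, t \in B -> s \in B -> t \proper s ->
        forall i, i < size (N1 t) -> psi s (phi1 t s i) = phi2 t s (psi t i)].

End Necklaces.

(* Main.v *)
Require Import Defs.
From mathcomp Require Import all_boot zify.
Set Implicit Arguments. Unset Strict Implicit. Unset Printing Implicit Defensive.

Lemma cyc3P a b c : cyc3 a b c <-> (a<b/\b<c) \/ (b<c/\c<a) \/ (c<a/\a<b).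
Proof. rewrite /cyc3; lia. Qed.

Lemma cyc3_refl (f : nat -> nat) n :
  (forall i j, i < n -> j < n -> f i = f j -> i = j) ->
  (forall i j k, i < n -> j < n -> k < n -> cyc3 i j k -> cyc3 (f i) (f j) (f k)) ->
  forall i j k, i < n -> j < n -> k < n -> cyc3 (f i) (f j) (f k) = cyc3 i j k.
Proof.
move=> Hi Hp i j k hi hj hk; apply/idP/idP; last exact: Hp.
move=> H; case C: (cyc3 i j k) => //.
have Hij : i <> j by move=> E; subst; move: H; rewrite /cyc3; lia.
have Hjk : j <> k by move=> E; subst; move: H; rewrite /cyc3; lia.
have Hik : i <> k by move=> E; subst; move: H; rewrite /cyc3; lia.
have : cyc3 i k j by move: C; rewrite /cyc3; lia.
move/(Hp _ _ _ hi hk hj); move: H; rewrite /cyc3; lia.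
Qed.

Lemma small_sing (V : finType) (v : V) L : small_symmetric [set v] L -> L = [:: v; v].
Proof.
case/andP => /forallP Hc _.
have Hall : all (pred1 v) L.
  apply/allP => x Hx; have := Hc x; rewrite inE.
  case: (eqVneq x v) => [->|ne]; first by rewrite /= eqxx.
  move/eqP => H0.
  by move: Hx; rewrite -has_pred1 has_count H0.
move/all_pred1P: Hall => HL; have := Hc v; rewrite inE eqxx HL count_nseq /= eqxx mul1n.
by move/eqP => ->.
Qed.

Lemma onth_lt (T : Type) (L : seq T) i c : onth L i = Some c -> i < size L.
Proof. by case: (leqP (size L) i) => // /onth_default ->. Qed.

Lemma onth_some T (L : seq T) i : i < size L -> exists c, onth L i = Some c.
Proof. elim: L i => [|a L IH] [|i] //= h; [by exists a | exact: IH]. Qed.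

Lemma small_mem (V : finType) (S : {set V}) L c : small_symmetric S L -> c \in L -> c \in S.
Proof.
case/andP => /forallP Hc _ H; have := Hc c; case: (c \in S) => //.
by move/eqP=> H0; move: H; rewrite -has_pred1 has_count H0.
Qed.

Section Gen.
Variable V : finType.
Variables (F : pred {set V}) (N : {set V} -> seq V) (phi : {set V} -> {set V} -> nat -> nat).
Hypothesis HC : consistent_collection F N phi.
Hypothesis HF : forall s t : {set V}, F s -> t \subset s -> t != set0 -> F t.

Definition posC s (x : V * bool) : nat :=
  if [set x.1] == s then nat_of_bool x.2 else phi [set x.1] s x.2.

Lemma F1 (s : {set V}) (v : V) : F s -> v \in s -> F [set v].
Proof.
move=> Fs vs; apply: (HF Fs); first by rewrite sub1set.
by apply/set0Pn; exists v; rewrite inE.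
Qed.

Lemma Nsing (s : {set V}) (v : V) : F s -> v \in s -> N [set v] = [:: v; v].
Proof. move=> Fs vs; case: HC => H1 _ _; exact/small_sing/H1/(F1 Fs vs). Qed.

Lemma proper1 (s : {set V}) (v : V) : v \in s -> [set v] != s -> [set v] \proper s.
Proof. by move=> vs ne; rewrite properEneq ne sub1set. Qed.

Lemma posC_col (s : {set V}) (x : V * bool) : F s -> x.1 \in s -> onth (N s) (posC s x) = Some x.1.
Proof.
move=> Fs xs; rewrite /posC; case: eqP => [E|/eqP ne].
  by rewrite -E (Nsing Fs xs); case: (x.2).
case: HC => _ H2 _; case: (H2 _ _ (F1 Fs xs) Fs (proper1 xs ne)) => _ Hcol _ _.
by rewrite Hcol (Nsing Fs xs) //; case: (x.2).
Qed.

Lemma posC_lt (s : {set V}) (x : V * bool) : F s -> x.1 \in s -> posC s x < size (N s).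
Proof. by move=> Fs xs; apply: (onth_lt (posC_col Fs xs)). Qed.

Lemma posC_inj (s : {set V}) (x y : V * bool) : F s -> x.1 \in s -> y.1 \in s -> posC s x = posC s y -> x = y.
Proof.
move=> Fs xs ys E.
have := posC_col Fs xs; rewrite E (posC_col Fs ys) => -[Exy].
case: x y Exy xs ys E => [v a] [w b] /= <- xs _; rewrite /posC /=.
case: eqP => [_ | /eqP ne].
  by case: a; case: b.
case: HC => _ H2 _; case: (H2 _ _ (F1 Fs xs) Fs (proper1 xs ne)) => Hi _ _ _.
move/Hi; rewrite (Nsing Fs xs) => H.
by case: a H; case: b => // H; case: (H erefl erefl).
Qed.

Lemma posC_surj (s : {set V}) i : F s -> i < size (N s) -> exists2 x, x.1 \in s & posC s x = i.
Proof.
move=> Fs hi; have [c Ho] := onth_some hi.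
have cs : c \in s.
  case: HC => H1 _ _; apply: (small_mem (H1 _ Fs)); apply/onthP; by exists i.
rewrite /posC; case: (eqVneq [set c] s) => [E|ne].
  move: hi; rewrite -E (Nsing Fs cs) => hi.
  exists (c, i == 1); first exact: set11.
  rewrite /= eqxx; case: i hi {Ho} => [|[|]] //.
case: HC => _ H2 _; case: (H2 _ _ (F1 Fs cs) Fs (proper1 cs ne)) => _ _ _ H4.
have [k hk Ek] := (H4 i c Ho).1 (set11 c).
move: hk; rewrite (Nsing Fs cs) => hk.
exists (c, k == 1) => //=; rewrite (negbTE ne) -Ek; case: k hk Ek => [|[|]] //.
Qed.

Lemma posC_phi (t s : {set V}) (x : V * bool) : F t -> F s -> t \proper s -> x.1 \in t ->
  phi t s (posC t x) = posC s x.
Proof.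
move=> Ft Fs ts xt.
have xs : x.1 \in s by move/properP: ts => [/subsetP] /(_ _ xt).
have ns : [set x.1] != s.
  apply/eqP => E; move: ts; rewrite -E => /proper_card; rewrite cards1 ltnS leqn0 cards_eq0.
  by move/eqP => t0; rewrite t0 inE in xt.
rewrite /posC (negbTE ns); case: eqP => [E|/eqP ne]; first by rewrite E.
case: HC => _ _ H3; rewrite H3 //; first exact: F1 Ft xt.
  exact: proper1.
by rewrite (Nsing Ft xt); case: (x.2).
Qed.

Lemma posC_cyc (r s : {set V}) (x y z : V * bool) : F r -> F s -> r \subset s ->
  x.1 \in r -> y.1 \in r -> z.1 \in r ->
  cyc3 (posC s x) (posC s y) (posC s z) = cyc3 (posC r x) (posC r y) (posC r z).
Proof.
move=> Fr Fs rs xr yr zr; case: (eqVneq r s) => [<-//|ne].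
have prs : r \proper s by rewrite properEneq ne rs.
rewrite -!(posC_phi Fr Fs prs) //.
case: HC => _ H2 _; case: (H2 _ _ Fr Fs prs) => Hi _ Hp _.
by apply: (cyc3_refl Hi Hp); apply: posC_lt.
Qed.

End Gen.

Lemma nat4 (rx ry rz p0 px py pz : nat) :
  rx != ry -> ry != rz -> rx != rz ->
  px != py -> py != pz -> px != pz -> p0 != px -> p0 != py -> p0 != pz ->
  (rx < ry) = cyc3 p0 px py -> (ry < rz) = cyc3 p0 py pz -> (rx < rz) = cyc3 p0 px pz ->
  cyc3 rx ry rz = cyc3 px py pz.
Proof.
move=> ? ? ? ? ? ? ? ? ? E1 E2 E3.
have {E1} E1 : rx < ry <-> cyc3 p0 px py by rewrite E1.
have {E2} E2 : ry < rz <-> cyc3 p0 py pz by rewrite E2.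
have {E3} E3 : rx < rz <-> cyc3 p0 px pz by rewrite E3.
rewrite !cyc3P in E1 E2 E3.
apply/idP/idP; rewrite !cyc3P; lia.
Qed.

Lemma cyc3_0l a b : 0 < b -> 0 < a -> cyc3 0 a b = (a < b).
Proof. move=> h1 h2; apply/idP/idP; rewrite /cyc3; lia. Qed.
Lemma cyc3_0m a b : 0 < b -> 0 < a -> cyc3 a 0 b = (b < a).
Proof. move=> h1 h2; apply/idP/idP; rewrite /cyc3; lia. Qed.
Lemma cyc3_0r a b : 0 < b -> 0 < a -> cyc3 a b 0 = (a < b).
Proof. move=> h1 h2; apply/idP/idP; rewrite /cyc3; lia. Qed.

Lemma cyc3_lt a b c : a < b -> cyc3 a c b = (a < c) && (c < b).
Proof. move=> h; apply/idP/idP; rewrite /cyc3; lia. Qed.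

Lemma bool_neq (a b : bool) : a != b -> a = ~~ b.
Proof. by case: a; case: b. Qed.

Lemma count_interval a b m : a < b ->
  count (fun i => (a < i) && (i < b)) (iota 0 m) = minn m b - minn m a.+1.
Proof.
move=> ab; elim: m => [|m IH]; first by rewrite /= !min0n.
have -> : iota 0 m.+1 = iota 0 m ++ [:: m] by rewrite -addn1 iotaD.
rewrite count_cat IH /= addn0.
case: (ltnP a m) => h1; case: (ltnP m b) => h2 /=; lia.
Qed.

Lemma card_count (T : finType) (A : {pred T}) (Q : pred T) :
  #|[set z in A | Q z]| = count Q (enum A).
Proof.
rewrite -size_filter -(card_uniqP (filter_uniq Q (enum_uniq A))).
by apply: eq_card => z; rewrite !inE mem_filter mem_enum andbC.
Qed.

Lemma eq_sym' (T : eqType) (x y : T) : x != y -> y != x.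
Proof. by rewrite eq_sym. Qed.

Lemma edge_nat (V : eqType) (L : seq V) (u v : V) p q a b :
  u <> v -> size L = 4 -> rot 2 L = L ->
  nth u L p = v -> nth u L q = v -> nth u L a = u -> nth u L b = u ->
  p < 4 -> q < 4 -> a < 4 -> b < 4 -> p != q -> a != b ->
  cyc3 p a q = ~~ cyc3 p b q.
Proof.
move=> uv; case: L => [|x0 [|x1 [|x2 [|x3 [|]]]]] //= _.
rewrite /rot /= => -[E1 E2 _ _]; subst x2 x3.
case: p => [|[|[|[|p]]]]; case: q => [|[|[|[|q]]]]; case: a => [|[|[|[|a]]]];
 case: b => [|[|[|[|b]]]] => //= H1 H2 H3 H4 *; try (exfalso; congruence).
Qed.

Lemma onth_nthE T (x0 : T) (L : seq T) i : i < size L -> onth L i = Some (nth x0 L i).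
Proof. elim: L i => [|a L IH] [|i] //= h; exact: IH. Qed.

Lemma rot_half (T : Type) (x0 : T) (L : seq T) n : size L = n * 2 ->
  (forall i, i < n -> nth x0 L (i + n) = nth x0 L i) -> rot n L = L.
Proof.
move=> sz H; apply: (@eq_from_nth _ x0); first by rewrite size_rot.
move=> i; rewrite size_rot sz => hi.
rewrite /rot nth_cat size_drop sz.
have -> : n * 2 - n = n by lia.
case: ltnP => h; first by rewrite nth_drop addnC H.
rewrite nth_take; last by lia.
by rewrite -{2}(subnK h) H //; lia.
Qed.

Section Good.
Variable V : finType.
Variable d : V * bool.
Variable cyc : V * bool -> V * bool -> V * bool -> bool.

Definition labp (p : V * bool -> nat) (t : {set V}) (i : nat) :=
  odflt d [pick x | (x.1 \in t) && (p x == i)].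

Definition good (s : {set V}) (L : seq V) (p : V * bool -> nat) : Prop :=
 [/\ small_symmetric s L,
     forall x, x.1 \in s -> onth L (p x) = Some x.1,
     forall x y, x.1 \in s -> y.1 \in s -> p x = p y -> x = y,
     forall i, i < size L -> exists2 x, x.1 \in s & p x = i
   & forall x y z, x.1 \in s -> y.1 \in s -> z.1 \in s -> cyc3 (p x) (p y) (p z) = cyc x y z].

Lemma labp_spec s L p i : good s L p -> i < size L -> (labp p s i).1 \in s /\ p (labp p s i) = i.
Proof.
case=> _ _ _ Hs _ hi; rewrite /labp; case: pickP => [x /andP [xs /eqP]|H] //=.
have [x xs E] := Hs i hi; by have := H x; rewrite xs E eqxx.
Qed.

Lemma labp_pos s L p x : good s L p -> x.1 \in s -> labp p s (p x) = x.
Proof.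
move=> G xs; have G' := G; case: G => _ _ Hi _ _; rewrite /labp.
case: pickP => [y /andP [ys /eqP E]|H] /=; first exact: Hi.
by have := H x; rewrite xs eqxx.
Qed.

Lemma good_lt s L p x : good s L p -> x.1 \in s -> p x < size L.
Proof. by case=> _ C _ _ _ xs; apply: (onth_lt (C x xs)). Qed.

Lemma good_morph t s Lt Ls pt ps : good t Lt pt -> good s Ls ps -> t \subset s ->
  restr_morph t Lt Ls (fun i => ps (labp pt t i)).
Proof.
move=> Gt Gs ts.
have Gt' := Gt; case: Gt => _ Ct It St Yt; case: Gs => _ Cs Is Ss Ys.
have sub (x : V * bool) : x.1 \in t -> x.1 \in s by move=> xt; exact: (subsetP ts _ xt).
split.
- move=> i j hi hj E; have [xi Ei] := labp_spec Gt' hi; have [xj Ej] := labp_spec Gt' hj.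
  by have := Is _ _ (sub _ xi) (sub _ xj) E => ex; rewrite -[LHS]Ei ex Ej.
- move=> i hi; have [xi Ei] := labp_spec Gt' hi.
  by rewrite Cs ?sub // -[in RHS]Ei Ct.
- move=> i j k hi hj hk.
  have [xi Ei] := labp_spec Gt' hi; have [xj Ej] := labp_spec Gt' hj.
  have [xk Ek] := labp_spec Gt' hk.
  by rewrite Ys ?sub // -Yt // Ei Ej Ek.
- move=> j c Hj; have hj := onth_lt Hj; have [x xs Ex] := Ss j hj; subst j.
  rewrite Cs // in Hj; case: Hj => <-; split.
    move=> xt; exists (pt x); first exact: good_lt Gt' xt.
    by rewrite (labp_pos Gt' xt).
  case=> i hi E; have [xi Ei] := labp_spec Gt' hi.
  by have := Is _ _ (sub _ xi) xs E => <-.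
Qed.

Lemma good_comp r t Lr Lt pr pt i : good r Lr pr -> good t Lt pt -> r \subset t ->
  i < size Lr -> labp pt t (pt (labp pr r i)) = labp pr r i.
Proof.
move=> Gr Gt rt hi; have [xr _] := labp_spec Gr hi.
exact: labp_pos Gt (subsetP rt _ xr).
Qed.

End Good.

Section Cons.
Variable V : finType.
Variable B : {set {set V}}.
Hypothesis HB : simplicial_complex B.
Variables (N0 : {set V} -> seq V) (phi0 : {set V} -> {set V} -> nat -> nat).
Hypothesis HC0 : consistent_collection (skel3 B) N0 phi0.

Lemma HF3 : forall s t : {set V}, skel3 B s -> t \subset s -> t != set0 -> skel3 B t.
Proof.
move=> s t /andP[sB s4] ts tn; rewrite /skel3 (proj2 HB s t sB ts tn) /=.
exact: leq_trans (subset_leq_card ts) s4.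
Qed.

Notation pos0 := (posC phi0).
Definition cols (x y z : V * bool) : {set V} := [set v in [:: x.1; y.1; z.1]].
Definition cycB (x y z : V * bool) :=
  cyc3 (pos0 (cols x y z) x) (pos0 (cols x y z) y) (pos0 (cols x y z) z).

Lemma cycB_at (s : {set V}) (x y z : V * bool) : skel3 B s -> x.1 \in s -> y.1 \in s -> z.1 \in s ->
  cycB x y z = cyc3 (pos0 s x) (pos0 s y) (pos0 s z).
Proof.
move=> Fs xs ys zs.
have sub : cols x y z \subset s.
  by apply/subsetP => w; rewrite !inE => /or3P [] /eqP ->.
have ne : cols x y z != set0 by apply/set0Pn; exists x.1; rewrite !inE eqxx.
have Fr := HF3 Fs sub ne.
by rewrite /cycB (posC_cyc HC0 HF3 Fr Fs sub) // !inE eqxx ?orbT.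
Qed.

Lemma cyc_emb (s : {set V}) (a b c e : V * bool) : s \in B ->
  a.1 \in s -> b.1 \in s -> c.1 \in s -> e.1 \in s ->
  exists p : V * bool -> nat,
   (forall u v, u \in [:: a; b; c; e] -> v \in [:: a; b; c; e] -> u != v -> p u != p v) /\
   (forall u v w, u \in [:: a; b; c; e] -> v \in [:: a; b; c; e] -> w \in [:: a; b; c; e] ->
      cycB u v w = cyc3 (p u) (p v) (p w)).
Proof.
move=> sB a1 b1 c1 e1.
pose r : {set V} := [set w in [:: a.1; b.1; c.1; e.1]].
have sub : r \subset s.
  by apply/subsetP => w; rewrite !inE => /or4P [] /eqP ->.
have ne : r != set0 by apply/set0Pn; exists a.1; rewrite !inE eqxx.
have rB := proj2 HB s r sB sub ne.
have r4 : #|r| <= 4 by rewrite cardsE; exact: card_size.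
have Fr : skel3 B r by rewrite /skel3 rB r4.
have memr u : u \in [:: a; b; c; e] -> u.1 \in r.
  by rewrite !inE => /or4P [] /eqP ->; rewrite eqxx ?orbT.
exists (pos0 r); split.
  move=> u v hu hv; apply: contra => /eqP E; apply/eqP.
  exact: (posC_inj HC0 HF3 Fr (memr u hu) (memr v hv) E).
by move=> u v w hu hv hw; exact: (cycB_at Fr (memr u hu) (memr v hv) (memr w hw)).
Qed.

Ltac emb sB a b c e :=
  let p := fresh "p" in let Hi := fresh "Hi" in let Hc := fresh "Hc" in
  have [p [Hi Hc]] := @cyc_emb _ a b c e sB ltac:(assumption) ltac:(assumption)
     ltac:(assumption) ltac:(assumption);
  rewrite ?Hc; try by rewrite !inE ?eqxx ?orbT.

Variable d : V * bool.
Definition beads (s : {set V}) : {set V * bool} := [set x | x.1 \in s].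
Definition b0 (s : {set V}) := odflt d [pick x in beads s].
Definition rank (s : {set V}) (y : V * bool) :=
  if y == b0 s then 0 else #|[set z in beads s | cycB (b0 s) z y]|.+1.

Lemma b0_in s : s \in B -> (b0 s).1 \in s.
Proof.
case: HB => H0 _ sB; rewrite /b0; case: pickP => [x|H]; first by rewrite inE.
exfalso; have : s != set0 by apply: contraNneq H0 => <-.
by case/set0Pn => v vs; have := H (v, false); rewrite inE vs.
Qed.

Lemma card_beads s : #|beads s| = #|s| * 2.
Proof.
have -> : beads s = setX s [set: bool] by apply/setP => -[v e]; rewrite !inE andbT.
by rewrite cardsX cardsT card_bool.
Qed.


Lemma rank_b0 s : rank s (b0 s) = 0.
Proof. by rewrite /rank eqxx. Qed.

Lemma rank_lt s y z : s \in B -> y.1 \in s -> z.1 \in s -> y != b0 s -> z != b0 s ->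
  cycB (b0 s) y z -> rank s y < rank s z.
Proof.
move=> sB ys zs ny nz Hyz; have bs := b0_in sB.
rewrite /rank (negbTE ny) (negbTE nz) ltnS; apply: proper_card; apply/properP; split.
  apply/subsetP => w; rewrite !inE => /andP [ws Hw]; rewrite ws /=.
  move: Hw Hyz; emb sB (b0 s) w y z; rewrite /cyc3; lia.
exists y; first by rewrite !inE ys Hyz.
rewrite !inE ys /=; emb sB (b0 s) y y y; rewrite /cyc3; lia.
Qed.


Lemma cycB_tot s x y z : s \in B -> x.1 \in s -> y.1 \in s -> z.1 \in s ->
  x != y -> y != z -> x != z -> cycB x y z || cycB x z y.
Proof.
move=> sB xs ys zs nxy nyz nxz; emb sB x y z z.
have h1 : p x != p y by apply: Hi => //; rewrite !inE eqxx ?orbT.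
have h2 : p y != p z by apply: Hi => //; rewrite !inE eqxx ?orbT.
have h3 : p x != p z by apply: Hi => //; rewrite !inE eqxx ?orbT.
move: h1 h2 h3; rewrite /cyc3; lia.
Qed.

Lemma rank_ltE s y z : s \in B -> y.1 \in s -> z.1 \in s -> y != b0 s -> z != b0 s -> y != z ->
  (rank s y < rank s z) = cycB (b0 s) y z.
Proof.
move=> sB ys zs ny nz nyz; have bs := b0_in sB.
apply/idP/idP; last exact: rank_lt.
move=> H; have := cycB_tot sB bs ys zs (eq_sym' ny) nyz (eq_sym' nz).
case/orP => // /(rank_lt sB zs ys nz ny); lia.
Qed.

Lemma rank_pos s y : y != b0 s -> 0 < rank s y.
Proof. by move=> ny; rewrite /rank (negbTE ny). Qed.

Lemma rank_inj s y z : s \in B -> y.1 \in s -> z.1 \in s -> rank s y = rank s z -> y = z.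
Proof.
move=> sB ys zs E; case: (eqVneq y z) => // nyz; exfalso.
case: (eqVneq y (b0 s)) => [ey|ny]; case: (eqVneq z (b0 s)) => [ez|nz].
- by move/eqP: nyz; apply; rewrite ey ez.
- by move: E (rank_pos nz); rewrite ey rank_b0 => <-.
- by move: E (rank_pos ny); rewrite ez rank_b0 => ->.
have := rank_ltE sB ys zs ny nz nyz; rewrite E ltnn => H1.
have := rank_ltE sB zs ys nz ny (eq_sym' nyz); rewrite E ltnn => H2.
have bs := b0_in sB.
have := cycB_tot sB bs ys zs (eq_sym' ny) nyz (eq_sym' nz).
by rewrite -H1 -H2.
Qed.


Lemma cycB_rot s x y z : s \in B -> x.1 \in s -> y.1 \in s -> z.1 \in s ->
  cycB x y z = cycB y z x.
Proof. move=> sB xs ys zs; emb sB x y z z; apply/idP/idP; rewrite /cyc3; lia. Qed.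

Lemma cycB_xx s x z : s \in B -> x.1 \in s -> z.1 \in s -> cycB x x z = false.
Proof. move=> sB xs zs; emb sB x x z z; apply/negbTE; rewrite /cyc3; lia. Qed.

Lemma rank_bound s y : s \in B -> y.1 \in s -> rank s y < #|s| * 2.
Proof.
move=> sB ys; have bs := b0_in sB.
have n0 : 0 < #|s| by apply/card_gt0P; exists (b0 s).1.
case: (eqVneq y (b0 s)) => [->|ny]; first by rewrite rank_b0; lia.
rewrite /rank (negbTE ny) -card_beads.
have : [set z in beads s | cycB (b0 s) z y] \proper (beads s :\ b0 s).
  apply/properP; split.
    apply/subsetP => w; rewrite !inE => /andP[ws Hw]; rewrite ws andbT.
    apply/eqP => E; move: Hw; rewrite E (cycB_xx sB) //.
  exists y; first by rewrite !inE ys ny.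
  by rewrite !inE ys /= (cycB_rot sB) // (cycB_xx sB).
move/proper_card; rewrite [#|beads s|](cardsD1 (b0 s)) inE bs => h; rewrite /= add1n ltnS; exact: h.
Qed.

Lemma rank_surj s i : s \in B -> i < #|s| * 2 -> exists2 y, y.1 \in s & rank s y = i.
Proof.
move=> sB hi.
have U : uniq (map (rank s) (enum (beads s))).
  rewrite map_inj_in_uniq ?enum_uniq // => y z; rewrite !mem_enum !inE => ys zs.
  exact: rank_inj sB ys zs.
have sub : {subset map (rank s) (enum (beads s)) <= iota 0 (#|s| * 2)}.
  move=> j /mapP [y]; rewrite mem_enum inE => ys ->.
  by rewrite mem_iota add0n rank_bound.
have sz : size (iota 0 (#|s| * 2)) <= size (map (rank s) (enum (beads s))).
  by rewrite size_iota size_map -cardE card_beads.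
have [_ E] := uniq_min_size U sub sz.
have : i \in iota 0 (#|s| * 2) by rewrite mem_iota.
rewrite -E => /mapP [y]; rewrite mem_enum inE => ys ->; by exists y.
Qed.

Lemma rank_cyc s x y z : s \in B -> x.1 \in s -> y.1 \in s -> z.1 \in s ->
  cyc3 (rank s x) (rank s y) (rank s z) = cycB x y z.
Proof.
move=> sB xs ys zs; have bs := b0_in sB.
case: (eqVneq x y) => [<-|nxy].
  rewrite (cycB_xx sB) //; apply/negbTE; rewrite /cyc3; lia.
case: (eqVneq y z) => [<-|nyz].
  rewrite (cycB_rot sB) // (cycB_xx sB) //; apply/negbTE; rewrite /cyc3; lia.
case: (eqVneq x z) => [<-|nxz].
  rewrite -(cycB_rot sB) // (cycB_xx sB) //; apply/negbTE; rewrite /cyc3; lia.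
case: (eqVneq x (b0 s)) => [ex|nx].
  have ny : y != b0 s by rewrite -ex eq_sym.
  have nz : z != b0 s by rewrite -ex eq_sym.
  rewrite ex rank_b0 -(rank_ltE sB ys zs ny nz nyz).
  have := rank_pos ny; have := rank_pos nz; move=> h1 h2.
  by rewrite cyc3_0l.
case: (eqVneq y (b0 s)) => [ey|ny].
  have nz : z != b0 s by rewrite -ey eq_sym.
  rewrite ey rank_b0 (cycB_rot sB) // -(rank_ltE sB zs xs nz nx (eq_sym' nxz)).
  have := rank_pos nx; have := rank_pos nz; move=> h1 h2.
  by rewrite cyc3_0m.
case: (eqVneq z (b0 s)) => [ez|nz].
  rewrite ez rank_b0 -(cycB_rot sB) // -(rank_ltE sB xs ys nx ny nxy).
  have := rank_pos nx; have := rank_pos ny; move=> h1 h2.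
  by rewrite cyc3_0r.
have E1 := rank_ltE sB xs ys nx ny nxy.
have E2 := rank_ltE sB ys zs ny nz nyz.
have E3 := rank_ltE sB xs zs nx nz nxz.
have r1 : rank s x != rank s y by apply: contra nxy => /eqP/(rank_inj sB xs ys) ->.
have r2 : rank s y != rank s z by apply: contra nyz => /eqP/(rank_inj sB ys zs) ->.
have r3 : rank s x != rank s z by apply: contra nxz => /eqP/(rank_inj sB xs zs) ->.
move: E1 E2 E3; emb sB (b0 s) x y z => E1 E2 E3.
have q1 : p x != p y by apply: Hi => //; rewrite !inE eqxx ?orbT.
have q2 : p y != p z by apply: Hi => //; rewrite !inE eqxx ?orbT.
have q3 : p x != p z by apply: Hi => //; rewrite !inE eqxx ?orbT.
have q4 : p (b0 s) != p x by apply: Hi => //; rewrite ?inE ?eqxx ?orbT // eq_sym.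
have q5 : p (b0 s) != p y by apply: Hi => //; rewrite ?inE ?eqxx ?orbT // eq_sym.
have q6 : p (b0 s) != p z by apply: Hi => //; rewrite ?inE ?eqxx ?orbT // eq_sym.
exact: (nat4 r1 r2 r3 q1 q2 q3 q4 q5 q6 E1 E2 E3).
Qed.


Lemma edge_beads s (v u : V) e : s \in B -> v \in s -> u \in s -> u != v ->
  cycB (v, e) (u, false) (v, ~~ e) = ~~ cycB (v, e) (u, true) (v, ~~ e).
Proof.
move=> sB vs us uv.
pose r : {set V} := [set v; u].
have sub : r \subset s by apply/subsetP => w; rewrite !inE => /orP [] /eqP ->.
have ne : r != set0 by apply/set0Pn; exists v; rewrite !inE eqxx.
have rB := proj2 HB s r sB sub ne.
have r4 : #|r| <= 4 by rewrite cards2; case: (v != u).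
have Fr : skel3 B r by rewrite /skel3 rB r4.
have vr : v \in r by rewrite !inE eqxx.
have ur : u \in r by rewrite !inE eqxx orbT.
rewrite !(cycB_at Fr) //.
case: HC0 => H1 _ _; have /andP [/forallP Hcnt Hrot] := H1 _ Fr.
have Hsz : size (N0 r) = 4.
  rewrite -(count_predC (pred1 v)).
  have := Hcnt v; rewrite vr => /eqP ->.
  rewrite (@eq_in_count _ _ (pred1 u)); last first.
    move=> x /(small_mem (H1 _ Fr)); rewrite !inE /=.
    by case/orP => /eqP ->; rewrite ?eqxx // eq_sym (negbTE uv).
  by have := Hcnt u; rewrite ur => /eqP ->.
move: Hrot; rewrite Hsz /= => /eqP Hrot.
have col x : x.1 \in r -> nth u (N0 r) (posC phi0 r x) = x.1.
  by move=> xr; apply: onth_nth; apply: (posC_col HC0 HF3 Fr xr).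
have lt x : x.1 \in r -> posC phi0 r x < 4.
  by move=> xr; rewrite -Hsz; apply: (posC_lt HC0 HF3 Fr xr).
have dist x y : x.1 \in r -> y.1 \in r -> x != y -> posC phi0 r x != posC phi0 r y.
  by move=> xr yr; apply: contra => /eqP /(posC_inj HC0 HF3 Fr xr yr) ->.
apply: (@edge_nat _ (N0 r) u v).
- by move/eqP: uv.
- exact: Hsz.
- exact: Hrot.
- exact: (col (v, e)).
- exact: (col (v, ~~ e)).
- exact: (col (u, false)).
- exact: (col (u, true)).
- exact: (lt (v, e)).
- exact: (lt (v, ~~ e)).
- exact: (lt (u, false)).
- exact: (lt (u, true)).
- by apply: dist => //=; rewrite xpair_eqE eqxx /=; case: e.
- by apply: dist => //=; rewrite xpair_eqE eqxx.
Qed.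


Lemma antip_count s v e : s \in B -> v \in s ->
  #|[set z in beads s | cycB (v, e) z (v, ~~ e)]| = #|s| - 1.
Proof.
move=> sB vs.
set Z := [set z in beads s | _].
have Zcol z : z \in Z -> z.1 \in s /\ z.1 != v.
  rewrite !inE => /andP [zs Hz]; split => //.
  apply/eqP => E; move: Hz; case: z zs E => w b /= zs E; subst w.
  case: (eqVneq b e) => [->|nb]; first by rewrite (cycB_xx sB).
  rewrite (bool_neq nb).
  by rewrite (cycB_rot sB) // (cycB_xx sB).
have inj : {in Z &, injective fst}.
  move=> [w a] [w' b] hz hz' /= E; subst w'.
  have [ws wv] := Zcol _ hz; rewrite /= in ws wv.
  case: (eqVneq a b) => [->//|nab]; exfalso.
  move: hz hz'; rewrite !inE /= ws /= => h1 h2.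
  have := edge_beads e sB vs ws wv.
  by case: a b nab h1 h2 => [] [] //= _ h1 h2; rewrite h1 h2.
rewrite -(card_in_imset inj).
have -> : [set x.1 | x in Z] = s :\ v.
  apply/setP => w; rewrite !inE; apply/imsetP/andP.
    by case=> z hz ->; have [zs zv] := Zcol _ hz; split.
  case=> wv ws; case H: (cycB (v, e) (w, false) (v, ~~ e)).
    by exists (w, false) => //; rewrite !inE ws H.
  exists (w, true) => //; rewrite !inE ws /=.
  have := edge_beads e sB vs ws wv; rewrite H.
  by case: (cycB _ _ _).
by rewrite [in RHS](cardsD1 v s) vs /= add1n subn1.
Qed.

Lemma rank_perm s : s \in B -> perm_eq (map (rank s) (enum (beads s))) (iota 0 (#|s| * 2)).
Proof.
move=> sB.
have U : uniq (map (rank s) (enum (beads s))).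
  rewrite map_inj_in_uniq ?enum_uniq // => y z; rewrite !mem_enum !inE => ys zs.
  exact: rank_inj sB ys zs.
have sub : {subset map (rank s) (enum (beads s)) <= iota 0 (#|s| * 2)}.
  move=> j /mapP [y]; rewrite mem_enum inE => ys ->.
  by rewrite mem_iota add0n rank_bound.
have sz : size (iota 0 (#|s| * 2)) <= size (map (rank s) (enum (beads s))).
  by rewrite size_iota size_map -cardE card_beads.
apply: uniq_perm => //; first exact: iota_uniq.
exact: (uniq_min_size U sub sz).2.
Qed.

Lemma rank_half s v e : s \in B -> v \in s -> rank s (v, e) < rank s (v, ~~ e) ->
  rank s (v, ~~ e) = rank s (v, e) + #|s|.
Proof.
move=> sB vs lt.
have n0 : 0 < #|s| by apply/card_gt0P; exists v.
have bb : rank s (v, ~~ e) < #|s| * 2 by apply: rank_bound.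
have Eset : [set z in beads s | cycB (v, e) z (v, ~~ e)] =
    [set z in beads s | (rank s (v, e) < rank s z) && (rank s z < rank s (v, ~~ e))].
  apply/setP => z; rewrite !inE; case zs: (z.1 \in s) => //=.
  by rewrite -(rank_cyc sB) // cyc3_lt.
have := antip_count e sB vs; rewrite Eset card_count.
have -> : count (fun z => (rank s (v, e) < rank s z) && (rank s z < rank s (v, ~~ e)))
     (enum (beads s)) = count (fun i => (rank s (v, e) < i) && (i < rank s (v, ~~ e)))
     (map (rank s) (enum (beads s))) by rewrite count_map.
move/permP: (rank_perm sB) => ->; rewrite count_interval //; lia.
Qed.

Lemma rank_antip s v e : s \in B -> v \in s ->
  rank s (v, ~~ e) = rank s (v, e) + #|s| \/ rank s (v, e) = rank s (v, ~~ e) + #|s|.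
Proof.
move=> sB vs; case: (ltngtP (rank s (v, e)) (rank s (v, ~~ e))) => h.
- by left; apply: rank_half.
- by right; have := @rank_half _ _ (~~ e) sB vs; rewrite negbK; apply.
- by exfalso; have := @rank_inj s (v, e) (v, ~~ e) sB vs vs h; case; case: (e).
Qed.


Notation labr s := (labp d (rank s) s).
Definition Ncons (s : {set V}) : seq V := mkseq (fun i => (labr s i).1) (#|s| * 2).

Lemma labr_spec s i : s \in B -> i < #|s| * 2 -> (labr s i).1 \in s /\ rank s (labr s i) = i.
Proof.
move=> sB hi; rewrite /labp; case: pickP => [x /andP [xs /eqP]|H] //=.
have [x xs E] := rank_surj sB hi; by have := H x; rewrite xs E eqxx.
Qed.

Lemma labr_pos s x : s \in B -> x.1 \in s -> labr s (rank s x) = x.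
Proof.
move=> sB xs; rewrite /labp.
case: pickP => [y /andP [ys /eqP E]|H] /=; first exact: rank_inj sB ys xs E.
by have := H x; rewrite xs eqxx.
Qed.

Lemma Ncons_sym s : s \in B -> small_symmetric s (Ncons s).
Proof.
move=> sB; apply/andP; split.
  apply/forallP => w.
  have -> : Ncons s = map fst (map (labr s) (iota 0 (#|s| * 2))).
    by rewrite /Ncons /mkseq -map_comp.
  have P : perm_eq (map (labr s) (iota 0 (#|s| * 2))) (enum (beads s)).
    apply: uniq_perm; last first.
    - move=> x; rewrite mem_enum inE; apply/mapP/idP.
        by case=> i; rewrite mem_iota add0n => /andP [_ hi] ->; case: (labr_spec sB hi).
      move=> xs; exists (rank s x); last by rewrite labr_pos.
      by rewrite mem_iota add0n rank_bound.
    - exact: enum_uniq.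
    rewrite map_inj_in_uniq ?iota_uniq // => i j; rewrite !mem_iota !add0n => /andP [_ hi] /andP [_ hj] E.
    by have := (labr_spec sB hi).2; rewrite E (labr_spec sB hj).2.
  rewrite count_map (permP P) -card_count.
  case ws: (w \in s).
    have -> : [set z in beads s | preim fst (pred1 w) z] = [set (w, false); (w, true)].
      apply/setP => -[u b]; rewrite !inE /= !xpair_eqE.
      by case: (eqVneq u w) => [->|] /=; rewrite ?ws ?andbF; case: b.
    by rewrite cards2 xpair_eqE eqxx.
  rewrite /= cards_eq0; apply/eqP/setP => -[u b]; rewrite !inE /=.
  by case: (eqVneq u w) => [->|]; rewrite ?ws ?andbF.
rewrite size_mkseq mulnK //; apply/eqP; apply: (@rot_half _ d.1).
  by rewrite size_mkseq.
move=> i hi.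
have n0 : 0 < #|s| by apply/card_gt0P; exists (b0 s).1; apply: b0_in.
rewrite !nth_mkseq; try lia.
have hi2 : i < #|s| * 2 by lia.
have [xs Ex] := labr_spec sB hi2.
set x := labr s i in xs Ex *.
have := @rank_antip s x.1 x.2 sB xs; rewrite -surjective_pairing Ex.
case=> [E|E]; last by lia.
by rewrite -E labr_pos.
Qed.

Lemma good_big s : s \in B -> good cycB s (Ncons s) (rank s).
Proof.
move=> sB; split.
- exact: Ncons_sym.
- move=> x xs; rewrite (onth_nthE d.1); last by rewrite size_mkseq rank_bound.
  by rewrite nth_mkseq ?rank_bound // labr_pos.
- move=> x y xs ys; exact: rank_inj.
- by move=> i; rewrite size_mkseq => hi; apply: rank_surj.
- move=> x y z xs ys zs; exact: rank_cyc.
Qed.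

Lemma good_small s : skel3 B s -> good cycB s (N0 s) (posC phi0 s).
Proof.
move=> Fs; split.
- by case: HC0 => H1 _ _; apply: H1.
- move=> x xs; exact: (posC_col HC0 HF3 Fs xs).
- move=> x y xs ys; exact: (posC_inj HC0 HF3 Fs xs ys).
- move=> i hi; exact: (posC_surj HC0 HF3 Fs hi).
- by move=> x y z xs ys zs; rewrite (cycB_at Fs).
Qed.

Definition Next (s : {set V}) := if #|s| <= 4 then N0 s else Ncons s.
Definition pext (s : {set V}) := if #|s| <= 4 then posC phi0 s else rank s.
Definition phiext (t s : {set V}) (i : nat) := pext s (labp d (pext t) t i).

Lemma good_ext s : s \in B -> good cycB s (Next s) (pext s).
Proof.
move=> sB; rewrite /Next /pext; case: ifP => h.
  by apply: good_small; rewrite /skel3 sB h.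
exact: good_big.
Qed.

Lemma existence : extends_collection B N0 phi0 Next phiext.
Proof.
split.
- split.
  + by move=> s sB; case: (good_ext sB).
  + move=> t s tB sB ts; exact: (good_morph d (good_ext tB) (good_ext sB) (proper_sub ts)).
  + move=> r t s rB tB sB rt ts i hi; rewrite /phiext.
    by rewrite (good_comp d (good_ext rB) (good_ext tB) (proper_sub rt) hi).
- by move=> s /andP [_ h]; rewrite /Next h.
- move=> t s Ft Fs ts i hi.
  have [_ h4t] := andP Ft; have [_ h4s] := andP Fs.
  rewrite /phiext /pext h4t h4s.
  have [xt Ex] := labp_spec d (good_small Ft) hi.
  by rewrite -[in RHS]Ex (posC_phi HC0 HF3 Ft Fs ts xt).
Qed.

Lemma uniq_good N1 phi1 : extends_collection B N0 phi0 N1 phi1 ->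
  forall s, s \in B -> good cycB s (N1 s) (posC phi1 s).
Proof.
case=> HC1 EN Ephi.
have HFB : forall s t : {set V}, mem B s -> t \subset s -> t != set0 -> mem B t.
  by move=> s t; apply: (proj2 HB).
have agree r x : skel3 B r -> x.1 \in r -> posC phi1 r x = posC phi0 r x.
  move=> Fr xr; rewrite /posC; case: eqP => // /eqP ne.
  have F1 : skel3 B [set x.1] by apply: (HF3 Fr); [rewrite sub1set | apply/set0Pn; exists x.1; rewrite inE].
  apply: Ephi => //; first exact: proper1.
  by rewrite (Nsing HC0 HF3 Fr xr); case: (x.2).
move=> s sB; split.
- by case: HC1 => H1 _ _; apply: H1.
- move=> x xs; exact: (posC_col HC1 HFB sB xs).
- move=> x y xs ys; exact: (posC_inj HC1 HFB sB xs ys).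
- move=> i hi; exact: (posC_surj HC1 HFB sB hi).
move=> x y z xs ys zs.
have sub : cols x y z \subset s.
  by apply/subsetP => w; rewrite !inE => /or3P [] /eqP ->.
have ne : cols x y z != set0 by apply/set0Pn; exists x.1; rewrite !inE eqxx.
have rB := proj2 HB s _ sB sub ne.
have Fr : skel3 B (cols x y z).
  by rewrite /skel3 rB /= /cols cardsE; apply: leq_trans (card_size _) _.
have xr : x.1 \in cols x y z by rewrite !inE eqxx.
have yr : y.1 \in cols x y z by rewrite !inE eqxx ?orbT.
have zr : z.1 \in cols x y z by rewrite !inE eqxx ?orbT.
rewrite (posC_cyc HC1 HFB rB sB sub xr yr zr).
by rewrite !agree.
Qed.

Lemma uniqueness N1 phi1 N2 phi2 :
  extends_collection B N0 phi0 N1 phi1 ->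
  extends_collection B N0 phi0 N2 phi2 ->
  iso_rel_skel3 B N1 phi1 N2 phi2.
Proof.
move=> E1 E2; have G1 := uniq_good E1; have G2 := uniq_good E2.
have HFB : forall s t : {set V}, mem B s -> t \subset s -> t != set0 -> mem B t.
  by move=> s t; apply: (proj2 HB).
case: E1 => HC1 _ Ephi1; case: E2 => HC2 _ Ephi2.
have agree (phi : {set V} -> {set V} -> nat -> nat) r x :
    (forall t s, skel3 B t -> skel3 B s -> t \proper s ->
        forall i, i < size (N0 t) -> phi t s i = phi0 t s i) ->
    skel3 B r -> x.1 \in r -> posC phi r x = posC phi0 r x.
  move=> Ephi Fr xr; rewrite /posC; case: eqP => // /eqP ne.
  have F1 : skel3 B [set x.1] by apply: (HF3 Fr); [rewrite sub1set | apply/set0Pn; exists x.1; rewrite inE].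
  apply: Ephi => //; first exact: proper1.
  by rewrite (Nsing HC0 HF3 Fr xr); case: (x.2).
exists (fun s i => posC phi2 s (labp d (posC phi1 s) s i)); split.
- move=> s sB; exact: (good_morph d (G1 s sB) (G2 s sB) (subxx s)).
- move=> s Fs i hi; have sB : s \in B by case/andP: Fs.
  have [xs Ex] := labp_spec d (G1 s sB) hi.
  by rewrite (agree _ _ _ Ephi2 Fs xs) -(agree _ _ _ Ephi1 Fs xs).
- move=> t s tB sB ts i hi.
  have [xt Ex] := labp_spec d (G1 t tB) hi.
  set x := labp d (posC phi1 t) t i in xt Ex *.
  have xs : x.1 \in s by apply: (subsetP (proper_sub ts)).
  rewrite -[in LHS]Ex (posC_phi HC1 HFB tB sB ts xt) (labp_pos d (G1 s sB) xs).
  by rewrite (posC_phi HC2 HFB tB sB ts xt).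
Qed.

End Cons.

Unset Implicit Arguments.
Theorem mainTheorem12 (V : finType) (B : {set {set V}}) :
  simplicial_complex B ->
  forall (N0 : {set V} -> seq V) (phi0 : {set V} -> {set V} -> nat -> nat),
    consistent_collection (skel3 B) N0 phi0 ->
    (exists N phi, extends_collection B N0 phi0 N phi) /\
    (forall N1 phi1 N2 phi2,
        extends_collection B N0 phi0 N1 phi1 ->
        extends_collection B N0 phi0 N2 phi2 ->
        iso_rel_skel3 B N1 phi1 N2 phi2).
Proof.
move=> HB N0 phi0 HC0.
case: (set_0Vmem B) => [B0 | [s0 s0B]].
  split.
    exists N0, phi0; split.
    - split.
      + by move=> s H; have : s \in B := H; rewrite B0 inE.
      + by move=> t s H; have : t \in B := H; rewrite B0 inE.
      + by move=> r t s H; have : r \in B := H; rewrite B0 inE.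
    - by move=> s; rewrite /skel3 B0 inE.
    - by move=> t s; rewrite /skel3 B0 inE.
  move=> N1 phi1 N2 phi2 _ _; exists (fun _ i => i); split.
  - by move=> s; rewrite B0 inE.
  - by move=> s; rewrite /skel3 B0 inE.
  - by move=> t s; rewrite B0 inE.
have /set0Pn [v _] : s0 != set0 by apply: contraNneq (proj1 HB) => <-.
split.
  by do 2 eexists; exact: (existence HB HC0 (v, false)).
move=> N1 phi1 N2 phi2; exact: (uniqueness HB HC0 (v, false)).
Qed.
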